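(* Let $G$ be a connected graph with $n$ vertices and $m$ edges. If either $n=13$ and $24\le m\le 78$, or $n=14$ and $23\le m\le 91$, then $\frac{q(G)}{R(G)}<\frac{n}{\sqrt{n-1}}$.
   Context: All graphs are finite and simple. For a vertex $u$, $d(u)$ is its degree. The Randić index is $R(G)=\sum_{\{u,v\}\in E(G)} \frac{1}{\sqrt{d(u)d(v)}}$. The signless Laplacian is $Q=D+A$ ($D$ the diagonal degree matrix, $A$ the adjacency matrix), and $q(G)$ is its largest eigenvalue. *)

(* Defs.v *)
From HB Require Import structures.
From mathcomp Require Import all_boot all_order all_algebra.
Set Implicit Arguments. Unset Strict Implicit. Unset Printing Implicit Defensive.
Import Order.TTheory GRing.Theory Num.Theory.
Local Open Scope ring_scope.

Definition simple_graph (n : nat) (e : rel 'I_n) : Prop :=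
  symmetric e /\ irreflexive e.

Definition connected_graph (n : nat) (e : rel 'I_n) : Prop :=
  forall x y : 'I_n, connect e x y.

Definition deg (n : nat) (e : rel 'I_n) (u : 'I_n) : nat := #|[set v | e u v]|.

Definition nedges (n : nat) (e : rel 'I_n) : nat :=
  #|[set p : 'I_n * 'I_n | (p.1 < p.2)%N && e p.1 p.2]|.

Definition randic (R : rcfType) (n : nat) (e : rel 'I_n) : R :=
  \sum_(u : 'I_n) \sum_(v : 'I_n | (u < v)%N && e u v)
     (Num.sqrt ((deg e u)%:R * (deg e v)%:R))^-1.

Definition signless_laplacian (R : rcfType) (n : nat) (e : rel 'I_n) : 'M[R]_n :=
  \matrix_(i, j) ((if i == j then (deg e i)%:R else 0) + (e i j)%:R).

Definition largest_eigenvalue (R : rcfType) (n : nat) (M : 'M[R]_n) (q : R) : Prop :=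
  eigenvalue M q /\ forall a : R, eigenvalue M a -> a <= q.

(* Main.v *)
Require Import Defs.
From HB Require Import structures.
From mathcomp Require Import all_boot all_order all_algebra.
From mathcomp Require Import ring lra zify.
Set Implicit Arguments. Unset Strict Implicit. Unset Printing Implicit Defensive.
Import Order.TTheory GRing.Theory Num.Theory.
Local Open Scope ring_scope.

Section G.
Variable R : rcfType.
Variable n : nat.
Variable e : rel 'I_n.
Hypothesis He : simple_graph e.

Lemma sum_edges (F : 'I_n -> R) :
  \sum_(u : 'I_n) \sum_(v : 'I_n | (u < v)%N && e u v) (F u + F v) =
  \sum_(u : 'I_n) (deg e u)%:R * F u.
Proof.
case: He => esym eirr.
have -> : \sum_(u : 'I_n) \sum_(v : 'I_n | (u < v)%N && e u v) (F u + F v) =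
  \sum_(u : 'I_n) \sum_(v : 'I_n | (u < v)%N && e u v) F u
  + \sum_(u : 'I_n) \sum_(v : 'I_n | (u < v)%N && e u v) F v.
  by rewrite -big_split /=; apply: eq_bigr => u _; rewrite big_split.
rewrite [X in _ + X = _](exchange_big_dep xpredT) //=.
rewrite -big_split /=; apply: eq_bigr => u _.
rewrite mulr_natl -sumr_const.
rewrite [RHS](bigID (fun v : 'I_n => (u < v)%N)) /=.
congr (_ + _); apply: eq_bigl => v; rewrite inE.
  by rewrite andbC.
rewrite (esym v u) -leqNgt; case euv: (e u v); rewrite ?andbF ?andbT //=.
rewrite ltn_neqAle; case: (eqVneq v u) => // vu.
  by rewrite vu eirr in euv.
by move: vu; rewrite -val_eqE => ->.
Qed.

Lemma nedges_sum : (nedges e)%:R = \sum_(u : 'I_n) \sum_(v : 'I_n | (u < v)%N && e u v) (1 : R).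
Proof.
rewrite /nedges pair_big_dep /= sumr_const; congr (_ *+ _).
by apply: eq_card => p; rewrite inE.
Qed.

Lemma handshake : 2 * (nedges e)%:R = \sum_(u : 'I_n) (deg e u)%:R :> R.
Proof.
rewrite -[RHS](eq_bigr _ (fun u _ => mulr1 _)) -sum_edges nedges_sum mulr_sumr.
by apply: eq_bigr => u _; rewrite mulr_sumr; apply: eq_bigr => v _; rewrite mulr_natl.
Qed.

Lemma sum1_deg (u : 'I_n) : \sum_(v : 'I_n | e u v) (1 : R) = (deg e u)%:R.
Proof.
rewrite /deg -sum1_card natr_sum; apply: eq_bigl => v; by rewrite inE.
Qed.

Hypothesis Hc : connected_graph e.
Hypothesis Hn : (1 < n)%N.

Lemma deg_gt0 (u : 'I_n) : (0 < deg e u)%N.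
Proof.
have [w wu] : exists w : 'I_n, w != u.
  case: (eqVneq (u : nat) 0%N) => h.
    by exists (Ordinal Hn); apply/eqP => /(congr1 val) /=; rewrite h.
  by exists (Ordinal (ltnW Hn)); apply/eqP => /(congr1 val) /= h'; rewrite -h' in h.
have /connectP [p pp wl] := Hc u w.
case: p pp wl => [|x p] /=; first by move=> _ wl; rewrite wl eqxx in wu.
case/andP => eux _ _.
by apply/card_gt0P; exists x; rewrite inE.
Qed.

Lemma deg_le (u : 'I_n) : (deg e u <= n.-1)%N.
Proof.
case: He => _ eirr.
rewrite /deg -[n in (_ <= n.-1)%N]card_ord -(cardsC1 u).
apply: subset_leq_card; apply/subsetP => v; rewrite !inE.
by apply: contraTneq => ->; rewrite eirr.
Qed.

Lemma deg_pos (u : 'I_n) : 0 < (deg e u)%:R :> R.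
Proof. by rewrite ltr0n deg_gt0. Qed.

Lemma randic_lb (al be : R) :
  (forall a b : nat, (0 < a <= n.-1)%N -> (0 < b <= n.-1)%N ->
     al * (a%:R^-1 + b%:R^-1) + be <= (Num.sqrt (a%:R * b%:R))^-1) ->
  al * n%:R + be * (nedges e)%:R <= randic R e.
Proof.
move=> H.
have -> : al * n%:R + be * (nedges e)%:R =
  \sum_(u : 'I_n) \sum_(v : 'I_n | (u < v)%N && e u v)
     (al * ((deg e u)%:R^-1 + (deg e v)%:R^-1) + be).
  rewrite nedges_sum mulr_sumr.
  have -> : n%:R = \sum_(u : 'I_n) (deg e u)%:R * (deg e u)%:R^-1 :> R.
    rewrite (eq_bigr (fun _ => 1)); last by move=> u _; rewrite mulfV // gt_eqF // deg_pos.
    by rewrite sumr_const card_ord.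
  rewrite -sum_edges mulr_sumr -big_split /=; apply: eq_bigr => u _.
  rewrite mulr_sumr mulr_sumr -big_split /=; apply: eq_bigr => v _.
  by rewrite mulr1.
apply: ler_sum => u _; apply: ler_sum => v _.
by apply: H; rewrite deg_gt0 deg_le.
Qed.

Lemma sumE_deg (i : 'I_n) : \sum_(j : 'I_n) ((e i j)%:R : R) = (deg e i)%:R.
Proof.
rewrite -sum1_deg [RHS]big_mkcond /=. apply: eq_bigr => j _; by case: (e i j).
Qed.

Lemma S_le1 (i : 'I_n) :
  \sum_(j : 'I_n) (deg e j)%:R * (e i j)%:R <= (deg e i)%:R * (n.-1)%:R :> R.
Proof.
rewrite -sumE_deg mulr_suml; apply: ler_sum => j _.
rewrite [X in _ <= X]mulrC; apply: ler_wpM2r; first by rewrite ler0n.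
by rewrite ler_nat deg_le.
Qed.

Lemma S_le2 (i : 'I_n) :
  \sum_(j : 'I_n) (deg e j)%:R * (e i j)%:R
     <= 2 * (nedges e)%:R - n%:R + 1 :> R.
Proof.
case: He => _ eirr.
have Hs : \sum_(j : 'I_n) (deg e j)%:R * (e i j)%:R
   + \sum_(j : 'I_n) (deg e j)%:R * (1 - (e i j)%:R) = 2 * (nedges e)%:R :> R.
  rewrite handshake -big_split /=; apply: eq_bigr => j _; ring.
have H1 : \sum_(j : 'I_n) (1 - (e i j)%:R) = n%:R - (deg e i)%:R :> R.
  by rewrite sumrB sumr_const card_ord sumE_deg.
have H2 : (deg e i)%:R - 1 <= \sum_(j : 'I_n) ((deg e j)%:R - 1) * (1 - (e i j)%:R) :> R.
  rewrite (bigD1 i) //= eirr subr0 mulr1 lerDl.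
  apply: sumr_ge0 => j _; apply: mulr_ge0.
    by rewrite subr_ge0 ler1n deg_gt0.
  by case: (e i j); rewrite ?subrr ?subr0.
have H3 : \sum_(j : 'I_n) (deg e j)%:R * (1 - (e i j)%:R) =
   \sum_(j : 'I_n) (1 - (e i j)%:R) + \sum_(j : 'I_n) ((deg e j)%:R - 1) * (1 - (e i j)%:R) :> R.
  rewrite -big_split /=; apply: eq_bigr => j _; ring.
lra.
Qed.

Lemma real_fy (D S M N : R) : 1 <= D -> D <= N - 1 -> 2 <= N ->
  S <= D * (N - 1) -> S <= 2 * M - N + 1 ->
  D * D + S <= D * (2 * M / (N - 1) + N - 2).
Proof.
move=> D1 DN N2 S1 S2.
have N1 : 0 < N - 1 by lra.
set K := 2 * M / (N - 1).
have KM : K * (N - 1) = 2 * M by rewrite /K mulfVK // gt_eqF.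
have [h|h] := lerP ((N - 1) * (D + 1)) (2 * M).
  have : (N - 1) * (D * D + S) <= (N - 1) * (D * (K + N - 2)).
    have : (N - 1) * (D * D + S) <= (N - 1) * (D * D + D * (N - 1)).
      by apply: ler_wpM2l; lra.
    move=> /le_trans; apply.
    have : D * ((N - 1) * (D + 1)) <= D * (2 * M) by apply: ler_wpM2l; lra.
    rewrite -KM; nra.
  by rewrite ler_pM2l.
have : (N - 1) * (D * D + S) <= (N - 1) * (D * (K + N - 2)).
  have : (N - 1) * (D * D + S) <= (N - 1) * (D * D + (2 * M - N + 1)).
    by apply: ler_wpM2l; lra.
  move=> /le_trans; apply.
  have h1 : 0 <= (N - 1) - D by lra.
  have h2 : 0 <= (N - 1) * D - (2 * M - N + 1) by lra.
  have := mulr_ge0 h1 h2.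
  rewrite -KM; nra.
by rewrite ler_pM2l.
Qed.

Lemma q_bound (a : R) : eigenvalue (signless_laplacian R e) a ->
  a <= 2 * (nedges e)%:R / (n.-1)%:R + n%:R - 2.
Proof.
case: He => esym eirr.
move/eigenvalueP => [v hv v0].
pose d j : R := (deg e j)%:R.
have dpos j : 0 < d j by apply: deg_pos.
have [j0 vj0] : exists j, v 0 j != 0.
  case: (pickP (fun j => v 0 j != 0)) => [j hj|H]; first by exists j.
  case/eqP: v0; apply/matrixP => i j; rewrite (ord1 i) mxE.
  by have := H j => /= /negbFE /eqP.
pose w j := `|v 0 j| / d j.
have [i _ Hi] := @arg_maxP _ R 'I_n j0 xpredT w isT.
have wpos : 0 < w i.
  apply: lt_le_trans (Hi j0 isT).
  by rewrite /w divr_gt0 // normr_gt0.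
have E := congr1 (fun M : 'rV[R]_n => M 0 i) hv; rewrite /= !mxE in E.
have E2 : a * v 0 i = v 0 i * d i + \sum_j v 0 j * (e i j)%:R.
  rewrite -E.
  under eq_bigr => j _ do rewrite !mxE mulrDr.
  rewrite big_split /=; congr (_ + _).
    rewrite (bigD1 i) //= eqxx big1 ?addr0 // => j /negbTE ->; by rewrite mulr0.
  by apply: eq_bigr => j _; rewrite esym.
pose S := \sum_(j : 'I_n) d j * (e i j)%:R.
have vi : `|v 0 i| = w i * d i by rewrite /w mulfVK // gt_eqF.
have E3 : `|a| * (w i * d i) <= w i * d i * d i + w i * S.
  rewrite -vi -normrM E2.
  apply: le_trans (ler_normD _ _) _.
  rewrite normrM (ger0_norm (ltW (dpos i))) lerD2l /S mulr_sumr.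
  apply: le_trans (ler_norm_sum _ _ _) _; apply: ler_sum => j _.
  rewrite normrM (ger0_norm (ler0n _ _)).
  have := Hi j isT; rewrite /w => hj.
  rewrite mulrA; apply: ler_wpM2r; first by rewrite ler0n.
  by rewrite -(ler_pdivrMr _ _ (dpos j)).
have E4 : `|a| * d i <= d i * d i + S.
  rewrite -(ler_pM2l wpos); rewrite mulrA mulrDr mulrA.
  by rewrite mulrCA [X in X <= _]mulrA in E3 *; lra.
have hn : (n.-1)%:R = n%:R - 1 :> R.
  have hn' : n%:R = (n.-1)%:R + 1 :> R by rewrite natr1 prednK // ltnW.
  by rewrite hn' addrK.
have F := real_fy (D := d i) (S := S) (M := (nedges e)%:R) (N := n%:R).
rewrite -hn in F.
have h1 : 1 <= d i by rewrite /d ler1n deg_gt0.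
have h2 : d i <= (n.-1)%:R by rewrite /d ler_nat deg_le.
have h3 : 2 <= n%:R :> R by rewrite ler_nat.
have F' := F h1 h2 h3 (S_le1 i) (S_le2 i).
have G : `|a| * d i <= d i * (2 * (nedges e)%:R / (n.-1)%:R + n%:R - 2).
  by apply: le_trans E4 _; apply: F'.
rewrite mulrC ler_pM2l // in G.
exact: le_trans (ler_norm a) G.
Qed.

End G.

Lemma pair_ineq (R : rcfType) (a b c1 c2 D : nat) : (0 < a)%N -> (0 < b)%N -> (0 < D)%N ->
  ((c1 * (a + b) + c2 * a * b) ^ 2 <= a * b * D ^ 2)%N ->
  c1%:R / D%:R * (a%:R^-1 + b%:R^-1) + c2%:R / D%:R <= (Num.sqrt (a%:R * b%:R))^-1 :> R.
Proof.
move=> a0 b0 D0 H.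
have a0' : 0 < a%:R :> R by rewrite ltr0n.
have b0' : 0 < b%:R :> R by rewrite ltr0n.
have D0' : 0 < D%:R :> R by rewrite ltr0n.
set x := Num.sqrt (a%:R * b%:R : R).
have ab0 : 0 < a%:R * b%:R :> R by rewrite mulr_gt0.
have xx : x * x = a%:R * b%:R by rewrite -expr2 sqr_sqrtr // ltW.
have x0 : 0 < x by rewrite sqrtr_gt0.
set T := (c1%:R * (a%:R + b%:R) + c2%:R * a%:R * b%:R) / D%:R : R.
have T0 : 0 <= T by rewrite divr_ge0 // ?ler0n //; apply: addr_ge0; rewrite ?mulr_ge0 ?ler0n ?addr_ge0.
have HR : (c1%:R * (a%:R + b%:R) + c2%:R * a%:R * b%:R) ^+ 2 <= a%:R * b%:R * D%:R ^+ 2 :> R.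
  by move: H; rewrite -(ler_nat R) !(natrX, natrD, natrM).
have TT : T * T <= x * x.
  rewrite xx /T -expr2 expr_div_n ler_pdivrMr ?exprn_gt0 //.
have Tx : T <= x by nra.
have -> : c1%:R / D%:R * (a%:R^-1 + b%:R^-1) + c2%:R / D%:R = T / (x * x).
  rewrite xx /T; field; rewrite !gt_eqF //.
rewrite ler_pdivrMr ?mulr_gt0 // mulrA mulVf ?gt_eqF // mul1r //.
Qed.
Lemma c13 (a b : nat) : (0 < a)%N -> (a <= 12)%N -> (0 < b)%N -> (b <= 12)%N ->
  ((24 * (a + b) + 5 * a * b) ^ 2 <= a * b * 108 ^ 2)%N.
Proof.
move=> a0 ak b0 bk.
destruct a as [|[|[|[|[|[|[|[|[|[|[|[|[|a]]]]]]]]]]]]]; try lia;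
destruct b as [|[|[|[|[|[|[|[|[|[|[|[|[|b]]]]]]]]]]]]]; lia.
Qed.
Lemma c14 (a b : nat) : (0 < a)%N -> (a <= 13)%N -> (0 < b)%N -> (b <= 13)%N ->
  ((39 * (a + b) + 8 * a * b) ^ 2 <= a * b * 182 ^ 2)%N.
Proof.
move=> a0 ak b0 bk.
destruct a as [|[|[|[|[|[|[|[|[|[|[|[|[|[|a]]]]]]]]]]]]]]; try lia;
destruct b as [|[|[|[|[|[|[|[|[|[|[|[|[|[|b]]]]]]]]]]]]]]; lia.
Qed.

Lemma sqrt_ub (R : rcfType) (k : nat) (c : R) : 0 <= c -> k%:R <= c * c ->
  Num.sqrt (k%:R : R) <= c.
Proof.
move=> c0 h; rewrite -(ger0_norm c0) -sqrtr_sqr; apply: ler_wsqrtr; by rewrite expr2.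
Qed.

Lemma final_step (R : rcfType) (q r K L s N : R) :
  q <= K -> L <= r -> 0 < L -> 0 <= K -> 0 < s -> K * s < N * L -> q / r < N / s.
Proof.
move=> qK Lr L0 K0 s0 key.
have r0 : 0 < r by apply: lt_le_trans Lr.
apply: (le_lt_trans (y := K / L)).
  apply: (le_trans (y := K / r)); first by rewrite ler_pM2r ?invr_gt0.
  by rewrite ler_pdivrMr // mulrAC ler_pdivlMr // ler_wpM2l.
by rewrite ltr_pdivrMr // mulrAC ltr_pdivlMr.
Qed.

Theorem lemma3p2 (R : rcfType) (n : nat) (e : rel 'I_n) (q : R) :
  simple_graph e -> connected_graph e ->
  ((n = 13%N /\ (24 <= nedges e <= 78)%N) \/ (n = 14%N /\ (23 <= nedges e <= 91)%N)) ->
  largest_eigenvalue (signless_laplacian R e) q ->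
  q / randic R e < n%:R / Num.sqrt (n.-1)%:R.
Proof.
move=> He Hc Hcase [Hq _].
case: Hcase => [[hn /andP [m1 m2]]|[hn /andP [m1 m2]]]; subst n.
- have Hn : (1 < 13)%N by [].
  have qb := q_bound He Hc Hn Hq.
  have rb := randic_lb He Hc Hn (al := 24%:R / 108%:R) (be := 5%:R / 108%:R)
    (fun a b ha hb => pair_ineq R (c1 := 24) (c2 := 5) (D := 108) (andP ha).1 (andP hb).1 isT
       (c13 (andP ha).1 (andP ha).2 (andP hb).1 (andP hb).2)).
  set m := (nedges e)%:R : R in qb rb.
  have m1' : 24 <= m by rewrite /m ler_nat.
  have m2' : m <= 78 by rewrite /m ler_nat.
  have s0 : 0 < Num.sqrt ((13.-1)%:R : R) by rewrite sqrtr_gt0 ltr0n.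
  set s := Num.sqrt ((13.-1)%:R : R) in s0 *.
  have ss : s * s = 12.
    by rewrite /s -expr2 sqr_sqrtr // ler0n.
  have e12 : (13.-1)%:R = 12 :> R by [].
  rewrite e12 in qb.
  apply: final_step qb rb _ _ s0 _.
  + lra.
  + lra.
  + set K := 2 * m / 12 + 13%:R - 2.
    set L := 24%:R / 108%:R * 13%:R + 5%:R / 108%:R * m.
    have KL : 12 * (K * K) < 13%:R * L * (13%:R * L) by rewrite /K /L; nra.
    have K0 : 0 < K by rewrite /K; lra.
    have L0 : 0 < 13%:R * L by rewrite /L; lra.
    nra.
- have Hn : (1 < 14)%N by [].
  have qb := q_bound He Hc Hn Hq.
  have rb := randic_lb He Hc Hn (al := 39%:R / 182%:R) (be := 8%:R / 182%:R)
    (fun a b ha hb => pair_ineq R (c1 := 39) (c2 := 8) (D := 182) (andP ha).1 (andP hb).1 isT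
       (c14 (andP ha).1 (andP ha).2 (andP hb).1 (andP hb).2)).
  set m := (nedges e)%:R : R in qb rb.
  have m1' : 23 <= m by rewrite /m ler_nat.
  have m2' : m <= 91 by rewrite /m ler_nat.
  have s0 : 0 < Num.sqrt ((14.-1)%:R : R) by rewrite sqrtr_gt0 ltr0n.
  set s := Num.sqrt ((14.-1)%:R : R) in s0 *.
  have ss : s * s = 13.
    by rewrite /s -expr2 sqr_sqrtr // ler0n.
  have e13 : (14.-1)%:R = 13 :> R by [].
  rewrite e13 in qb.
  apply: final_step qb rb _ _ s0 _.
  + lra.
  + lra.
  + set K := 2 * m / 13 + 14%:R - 2.
    set L := 39%:R / 182%:R * 14%:R + 8%:R / 182%:R * m.
    have KL : 13 * (K * K) < 14%:R * L * (14%:R * L) by rewrite /K /L; nra.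
    have K0 : 0 < K by rewrite /K; lra.
    have L0 : 0 < 14%:R * L by rewrite /L; lra.
    nra.
Qed.
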